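(* Let $\epsilon>0$, let $(\epsilon_k)_{k\in\mathbb N}$ be positive numbers with $\sum_{k=1}^\infty\epsilon_k<\epsilon$, let $(j_k)_{k\in\mathbb N}$ be a strictly increasing sequence of even natural numbers, and let $(x_k)_{k\in\mathbb N}$ be a block sequence in $\mathfrak X_0$ such that (i) $\|x_k\|_{W_0}=1$ for all $k$; (ii) $\frac{|\operatorname{supp}x_k|}{m_{j_k}}<\epsilon_k$ for all $k$; (iii) $\|x_{k+1}\|_{G_0}\le\frac{\epsilon_k}{n_{j_k}}$ for all $k$. Then $(x_k)_{k\in\mathbb N}$ is $(1+\epsilon)$-equivalent to the unit vector basis of $c_0$, i.e. $\max_i|a_i|\le\|\sum_{i=1}^n a_ix_i\|_{W_0}\le(1+\epsilon)\max_i|a_i|$ for all $n$ and all real $a_1,\dots,a_n$.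
   Context: All spaces are real. Let $c_{00}(\mathbb N)$ be the space of finitely supported real sequences, $(e_n)$ its unit vector basis and $e_n^*$ the coordinate functionals (elements of $c_{00}(\mathbb N)$ act on each other via the usual inner product). For $x\in c_{00}(\mathbb N)$, $\operatorname{supp}x=\{n:x(n)\ne0\}$ and $\operatorname{ran}x$ is the smallest interval of $\mathbb N$ containing $\operatorname{supp}x$; for nonzero $x,y$ write $x<y$ if $\max\operatorname{ran}x<\min\operatorname{ran}y$. For an interval $E\subset\mathbb N$, $Ef=f\cdot\chi_E$. A block sequence is a sequence $x_1<x_2<\cdots$ of nonzero finitely supported vectors. Put $m_1=2^8$, $m_{j+1}=m_j^5$, $n_1=2^7$, $n_{j+1}=(2n_j)^{s_{j+1}}$ with $s_{j+1}=\log_2(m_{j+1}^4)$. $G_0$ is the smallest subset of $c_{00}(\mathbb N)$ such that: (1) it contains all $e_n^*$; (2) it is symmetric; (3) for every $j\in\mathbb N$, every $d\le n_{2j}$ and every $f_1<\dots<f_d$ in $G_0$, it contains $\frac1{m_{2j}}\sum_{i=1}^d f_i$; (4) it contains $\sum_{i=1}^d a_if_i$ whenever $d\in\mathbb N$, $a_i\in\mathbb Q$, $\sum a_i^2\le1$, and $f_i\in G_0$ have pairwise different weights. An $f\in G_0$ has weight $w(f)=m_{2j}$ (and is called a functional with weight) if $f=\frac1{m_{2j}}\sum_{i=1}^d f_i$ for some $d\le n_{2j}$ and $f_1<\dots<f_d$ in $G_0$. Fix disjoint infinite sets $\Omega_1,\Omega_2\subset\mathbb N$, let $Q_s$ be the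 (countable) set of finite sequences $(f_1,\dots,f_d)$ of nonzero elements of $G_0$ with $f_1<\dots<f_d$, and fix an injection $\sigma:Q_s\to\{2j:j\in\Omega_2\}$ with $m_{\sigma(f_1,\dots,f_d)}>\max\{1/|f_i(e_l)|:i\le d,\ l\in\operatorname{supp}f_i\}\cdot\max\operatorname{supp}f_d$. A $\sigma$-$n_{2j+1}$ special sequence is an element $(f_1,\dots,f_{n_{2j+1}})$ of $Q_s$ such that each $f_i$ is a functional with weight, $w(f_1)=m_{2j_1}$ with $j_1\in\Omega_1$ and $n_{2j+1}^2<m_{2j_1}$, and $w(f_{i+1})=m_{\sigma(f_1,\dots,f_i)}$ for $1\le i<n_{2j+1}$. $W_0=G_0\cup\{\varepsilon E(\frac1{m_{2j+1}}\sum_{i=1}^{n_{2j+1}}f_i):|\varepsilon|=1,\ E\text{ a finite interval of }\mathbb N,\ (f_i)\text{ a }\sigma\text{-}n_{2j+1}\text{ special sequence}\}$. For $x\in c_{00}(\mathbb N)$ let $\|x\|_{G_0}=\sup_{f\in G_0}|f(x)|$ and $\|x\|_{W_0}=\sup_{f\in W_0}|f(x)|$; $\mathfrak{X}_{G_0}$ and $\mathfrak{X}_0$ are the completions of $c_{00}(\mathbb N)$ under these norms. *)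

(* Defs.v *)
From HB Require Import structures.
From mathcomp Require Import all_boot all_order all_algebra.
From mathcomp Require Import all_classical all_reals.
From mathcomp Require Import ereal topology normedtype sequences.
Set Implicit Arguments. Unset Strict Implicit. Unset Printing Implicit Defensive.
Import Order.TTheory GRing.Theory Num.Theory.
Local Open Scope ring_scope.

(* Coordinates are indexed from 0: our coordinate i is the paper's i+1. *)

(* The parameter sequences m_j, n_j (j >= 1); the value at j = 0 is a dummy. *)
Fixpoint m_aux (k : nat) : nat :=
  match k with 0 => (2 ^ 8)%N | k'.+1 => (m_aux k' ^ 5)%N end.
Definition m_seq (j : nat) : nat := m_aux j.-1.
(* s_j = log_2 (m_j^4) (m_j^4 is a power of 2, so trunc_log is exact) *)
Definition s_seq (j : nat) : nat := trunc_log 2 (m_seq j ^ 4).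
Fixpoint n_aux (k : nat) : nat :=
  match k with 0 => (2 ^ 7)%N | k'.+1 => ((2 * n_aux k') ^ (s_seq k'.+2))%N end.
Definition n_seq (j : nat) : nat := n_aux j.-1.

Section Space.
Variable R : realType.
Definition vec := nat -> R.

Definition zerov : vec := fun _ => 0.
Definition unitv (n : nat) : vec := fun i => if i == n then 1 else 0.

Definition c00 (x : vec) : Prop := exists N, forall i, (N <= i)%N -> x i = 0.
Definition nonzero (x : vec) : Prop := exists i, x i != 0.
Definition blk (x y : vec) : Prop :=
  nonzero x /\ nonzero y /\ forall i l, x i != 0 -> y l != 0 -> (i < l)%N.

Inductive G0 : vec -> Prop :=
| G0_unit (n : nat) : G0 (unitv n)
| G0_opp (f : vec) : G0 f -> G0 (fun i => - f i)
| G0_wt (k : nat) (f : vec) : G0w k f -> G0 f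
| G0_comb (d : nat) (a : nat -> rat) (K : nat -> nat) (F : nat -> vec) :
    \sum_(i < d) (a i) ^+ 2 <= 1 ->
    (forall i, (i < d)%N -> G0w (K i) (F i)) ->
    (forall i1 i2, (i1 < d)%N -> (i2 < d)%N -> K i1 = K i2 -> i1 = i2) ->
    G0 (fun l => \sum_(i < d) ratr (a i) * F i l)
with G0w : nat -> vec -> Prop :=
| G0w_avg (j d : nat) (F : nat -> vec) :
    (0 < j)%N -> (1 <= d <= n_seq (2 * j))%N ->
    (forall i, (i < d)%N -> G0 (F i)) ->
    (forall i1 i2, (i1 < i2 < d)%N -> blk (F i1) (F i2)) ->
    G0w (2 * j) (fun l => ((m_seq (2 * j))%:R)^-1 * \sum_(i < d) F i l).

Definition nthv (s : seq vec) (i : nat) : vec := nth zerov s i.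

Definition Qs (s : seq vec) : Prop :=
  (1 <= size s)%N /\
  (forall i, (i < size s)%N -> G0 (nthv s i) /\ nonzero (nthv s i)) /\
  (forall i1 i2, (i1 < i2 < size s)%N -> blk (nthv s i1) (nthv s i2)).

Definition admissible (Om1 Om2 : nat -> Prop) (sigma : seq vec -> nat) : Prop :=
  (forall j, Om1 j -> (0 < j)%N) /\ (forall j, Om2 j -> (0 < j)%N) /\
  (forall j, Om1 j -> Om2 j -> False) /\
  (forall N, exists j, (N <= j)%N /\ Om1 j) /\
  (forall N, exists j, (N <= j)%N /\ Om2 j) /\
  (forall s t, Qs s -> Qs t -> sigma s = sigma t -> s = t) /\
  (forall s, Qs s -> exists j, Om2 j /\ sigma s = (2 * j)%N) /\
  (forall s, Qs s -> forall i l l', (i < size s)%N ->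
     nthv s i l != 0 -> nthv s (size s).-1 l' != 0 ->
     (`|nthv s i l|)^-1 * (l'.+1)%:R < (m_seq (sigma s))%:R).

Definition special (Om1 : nat -> Prop) (sigma : seq vec -> nat) (j : nat)
  (s : seq vec) : Prop :=
  size s = n_seq (2 * j + 1) /\ Qs s /\
  (exists j1, Om1 j1 /\ (n_seq (2 * j + 1) ^ 2 < m_seq (2 * j1))%N /\
              G0w (2 * j1) (nthv s 0)) /\
  (forall i, (1 <= i < size s)%N -> G0w (sigma (take i s)) (nthv s i)).

Definition W0 (Om1 : nat -> Prop) (sigma : seq vec -> nat) (f : vec) : Prop :=
  G0 f \/
  exists (eps : R) (a b j : nat) (s : seq vec),
    `|eps| = 1 /\ (0 < j)%N /\ special Om1 sigma j s /\
    f = (fun l => if (a <= l <= b)%N then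
                    eps * (((m_seq (2 * j + 1))%:R)^-1 *
                           \sum_(i < size s) nthv s i l)
                  else 0).

Definition normOver (P : vec -> Prop) (x : vec) : R :=
  sup [set r : R | exists f N, P f /\ (forall i, (N <= i)%N -> x i = 0) /\
                              r = `|\sum_(i < N) f i * x i| ].

Definition normG (x : vec) : R := normOver G0 x.
Definition normW Om1 sigma (x : vec) : R := normOver (W0 Om1 sigma) x.

Definition supp_size (x : vec) (c : nat) : Prop :=
  exists S : seq nat, uniq S /\ (forall i, (i \in S) = (x i != 0)) /\ size S = c.

End Space.

(* Main.v *)
Require Import Defs.
From HB Require Import structures.
From mathcomp Require Import all_boot all_order all_algebra.
From mathcomp Require Import all_classical all_reals.
From mathcomp Require Import ereal topology normedtype sequences.
From mathcomp Require Import zify.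
From mathcomp Require Import ring lra.
Import Order.TTheory GRing.Theory Num.Theory.
Local Open Scope ring_scope.
Lemma m_aux_ge2 k : (2 <= m_aux k)%N.
Proof.
elim: k => [//|k IH] /=.
apply: (leq_trans IH); rewrite -{1}(expn1 (m_aux k)) leq_pexp2l //.
exact: leq_trans IH.
Qed.

Lemma m_aux_step k : (m_aux k <= m_aux k.+1)%N.
Proof.
rewrite /= -{1}(expn1 (m_aux k)) leq_pexp2l //.
exact: leq_trans (m_aux_ge2 k).
Qed.

Lemma m_aux_pow k : (2 ^ k.+1 <= m_aux k)%N.
Proof.
elim: k => [//|k IH] /=.
have h2 := m_aux_ge2 k.
rewrite expnS.
apply: (@leq_trans (m_aux k * 2)); first lia.

have -> : (m_aux k ^ 5 = m_aux k * m_aux k ^ 4)%N by rewrite -expnS.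
rewrite leq_mul2l; apply/orP; right.
apply: (leq_trans h2); rewrite -{1}(expn1 (m_aux k)) leq_pexp2l //.
exact: leq_trans h2.
Qed.

Lemma m_seq_mono i k : (i <= k)%N -> (m_seq i <= m_seq k)%N.
Proof.
move=> h; rewrite /m_seq.
apply: (homo_leq (r := leq)) => //; first exact: leq_trans.
  exact: m_aux_step.
by rewrite -!subn1 leq_sub2r.
Qed.

Lemma m_seq_pos k : (0 < m_seq k)%N.
Proof. exact: leq_trans (m_aux_ge2 _). Qed.

Lemma m_seq_pow k : (0 < k)%N -> (2 ^ k <= m_seq k)%N.
Proof. by case: k => // k _; exact: m_aux_pow. Qed.

Lemma s_seq_pos k : (0 < s_seq k)%N.
Proof.
rewrite /s_seq trunc_log_gt0 /=.
have h := m_aux_ge2 k.-1.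
rewrite /m_seq; apply: (@leq_trans (m_aux k.-1)) => //.
rewrite -{1}(expn1 (m_aux k.-1)) leq_pexp2l //; exact: leq_trans h.
Qed.

Lemma n_aux_pos k : (0 < n_aux k)%N.
Proof.
elim: k => [//|k IH] /=.
by rewrite expn_gt0 muln_gt0 IH.
Qed.

Lemma n_aux_step k : (n_aux k <= n_aux k.+1)%N.
Proof.
rewrite /=; have h := n_aux_pos k.
apply: (@leq_trans (2 * n_aux k)); first by rewrite leq_pmull.
rewrite -{1}(expn1 (2 * n_aux k)) leq_pexp2l ?s_seq_pos //.
by rewrite muln_gt0 h.
Qed.

Lemma n_seq_mono i k : (i <= k)%N -> (n_seq i <= n_seq k)%N.
Proof.
move=> h; rewrite /n_seq.
apply: (homo_leq (r := leq)) => //; first exact: leq_trans.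
  exact: n_aux_step.
by rewrite -!subn1 leq_sub2r.
Qed.

Lemma n_seq_pos k : (0 < n_seq k)%N.
Proof. exact: n_aux_pos. Qed.
Scheme G0_mut := Induction for G0 Sort Prop
  with G0w_mut := Induction for G0w Sort Prop.

Section Main.
Variable R : realType.

Definition restr (a b : nat) (f : vec R) : vec R :=
  fun l => if (a <= l <= b)%N then f l else 0.

Lemma zero_G0 : G0 (zerov R).
Proof.
have := @G0_comb R 0 (fun _ => 0) id (fun _ => zerov R).
have -> : (fun l => \sum_(i < 0) ratr ((fun _ => 0 : rat) i) * (fun _ => zerov R) i l)
   = zerov R by apply: funext => l; rewrite big_ord0.
apply; by [rewrite big_ord0 | ].
Qed.

Lemma nonzeroP (f : vec R) : ~ nonzero f -> forall l, f l = 0.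
Proof.
move=> h l; apply/eqP; apply/negPn/negP => hl; apply: h; by exists l.
Qed.

Definition PG (f : vec R) := forall a b, G0 (restr a b f).
Definition PW k (f : vec R) :=
  forall a b, G0w k (restr a b f) \/ restr a b f = zerov R.

Lemma rc_unit n : PG (unitv R n).
Proof.
move=> a b; case h: (a <= n <= b)%N.
  have -> : restr a b (unitv R n) = unitv R n; last exact: G0_unit.
  apply: funext => l; rewrite /restr /unitv; case: eqP => [->|]; by rewrite ?h // if_same.
have -> : restr a b (unitv R n) = zerov R; last exact: zero_G0.
apply: funext => l; rewrite /restr /unitv /zerov; case: eqP => [->|]; by rewrite ?h // if_same.
Qed.

Lemma rc_opp f : PG f -> PG (fun i => - f i).
Proof.
move=> h a b.
have -> : restr a b (fun i => - f i) = (fun i => - restr a b f i).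
  by apply: funext => l; rewrite /restr; case: ifP; rewrite ?oppr0.
exact: G0_opp.
Qed.

Lemma rc_wt k f : PW k f -> PG f.
Proof.
move=> h a b; case: (h a b) => [H|->]; [exact: G0_wt H | exact: zero_G0].
Qed.
Lemma rc_comb d (a : nat -> rat) K (F : nat -> vec R) :
  \sum_(i < d) a i ^+ 2 <= 1 ->
  (forall i, (i < d)%N -> G0w (K i) (F i)) ->
  (forall i, (i < d)%N -> PW (K i) (F i)) ->
  (forall i1 i2, (i1 < d)%N -> (i2 < d)%N -> K i1 = K i2 -> i1 = i2) ->
  PG (fun l => \sum_(i < d) ratr (a i) * F i l).
Proof.
move=> ha hF hP hK al bl.
pose good i := `[< G0w (K i) (restr al bl (F i)) >].
pose a' i := if good i then a i else 0.
pose F' i := if good i then restr al bl (F i) else F i.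
have -> : restr al bl (fun l => \sum_(i < d) ratr (a i) * F i l)
        = (fun l => \sum_(i < d) ratr (a' i) * F' i l).
  apply: funext => l; rewrite /restr; case: ifP => hl.
    apply: eq_bigr => i _; rewrite /a' /F'; case: ifP => hg.
      by rewrite /restr hl.
    case: (hP i (ltn_ord i) al bl) => [hw|hz].
      by move: hg; rewrite /good; case: asboolP.
    have := congr1 (fun g => g l) hz; rewrite /restr hl /zerov => ->.
    by rewrite !mulr0.
  symmetry; rewrite big1 // => i _; rewrite /a' /F'; case: ifP => hg.
    by rewrite /restr hl mulr0.
  by rewrite rmorph0 mul0r.
apply: G0_comb => //.
- apply: le_trans ha; apply: ler_sum => i _; rewrite /a'; case: ifP => // _.
  by rewrite expr0n /= sqr_ge0.
- move=> i hi; rewrite /F'; case: ifP => hg; last exact: hF.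
  by move/asboolP: hg.
- exact: hK.
Qed.
Lemma restr_nz a b (f : vec R) l : restr a b f l != 0 -> f l != 0.
Proof. by rewrite /restr; case: ifP => // _; rewrite eqxx. Qed.

Lemma rc_avg j d (F : nat -> vec R) :
  (0 < j)%N -> (0 < d <= n_seq (2 * j))%N ->
  (forall i, (i < d)%N -> PG (F i)) ->
  (forall i1 i2, (i1 < i2 < d)%N -> blk (F i1) (F i2)) ->
  PW (2 * j) (fun l => ((m_seq (2 * j))%:R)^-1 * \sum_(i < d) F i l).
Proof.
move=> hj hd hP hb al bl.
pose g i := restr al bl (F i).
pose s := [seq i <- iota 0 d | `[< nonzero (g i) >]].
have key : forall l, restr al bl (fun l => ((m_seq (2 * j))%:R)^-1 * \sum_(i < d) F i l) l
   = ((m_seq (2 * j))%:R)^-1 * \sum_(t < size s) g (nth 0%N s t) l.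
  move=> l; rewrite /restr; case: ifP => hl; last first.
    by rewrite big1 ?mulr0 // => t _; rewrite /g /restr hl.
  congr (_ * _).
  transitivity (\sum_(i < d) g i l).
    by apply: eq_bigr => i _; rewrite /g /restr hl.
  rewrite -(big_mkord xpredT (fun i => g i l)) (bigID (fun i => `[< nonzero (g i) >])) /=.
  rewrite [X in _ + X]big1 ?addr0; last first.
    by move=> i /asboolP hn; exact: nonzeroP hn l.
  by rewrite -big_filter /index_iota subn0 -/s (big_nth 0%N) big_mkord.
have hsd : (size s <= d)%N by rewrite size_filter (leq_trans (count_size _ _)) // size_iota.
have hmem : forall t, (t < size s)%N -> (nth 0%N s t < d)%N /\ nonzero (g (nth 0%N s t)).
  move=> t ht; have := mem_nth 0%N ht; rewrite mem_filter mem_iota add0n /=.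
  by case/andP => /asboolP ? ->.
case: (posnP (size s)) => hs.
  right; apply: funext => l; rewrite key hs big_ord0 mulr0 //.
left.
have -> : restr al bl (fun l => ((m_seq (2 * j))%:R)^-1 * \sum_(i < d) F i l)
   = (fun l => ((m_seq (2 * j))%:R)^-1 * \sum_(t < size s) g (nth 0%N s t) l).
  exact: funext key.
apply: (@G0w_avg R j (size s) (fun t => g (nth 0%N s t))) => //.
- by rewrite hs (leq_trans hsd) //; case/andP: hd.
- by move=> t ht; case: (hmem t ht) => h1 _; exact: hP.
- move=> t1 t2 /andP [h12 h2].
  have h1 : (t1 < size s)%N by exact: ltn_trans h2.
  have hlt : (nth 0%N s t1 < nth 0%N s t2)%N.
    apply: (sorted_ltn_nth ltn_trans) => //.
    by rewrite /s; apply: sorted_filter; [exact: ltn_trans | exact: iota_ltn_sorted].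
  case: (hmem t1 h1) => hd1 hn1; case: (hmem t2 h2) => hd2 hn2.
  have [_ [_ hB]] := hb _ _ (introT andP (conj hlt hd2)).
  split => //; split => // i l hi hl.
  by apply: hB; apply: restr_nz; [exact: hi | exact: hl].
Qed.
Lemma restr_G0 f : G0 f -> PG f.
Proof.
move=> h.
apply: (@G0_mut R (fun f _ => PG f) (fun k f _ => PW k f)) h.
- exact: rc_unit.
- by move=> f0 _; exact: rc_opp.
- by move=> k f0 _; exact: rc_wt.
- move=> d a K F ha hF IH hK; exact: (@rc_comb d a K F).
- move=> j0 d0 F0 hj hd hF IH hb; exact: (@rc_avg j0 d0 F0).
Qed.

Lemma restr_G0w k f : G0w k f -> PW k f.
Proof.
move=> h.
apply: (@G0w_mut R (fun f _ => PG f) (fun k f _ => PW k f)) h.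
- exact: rc_unit.
- by move=> f0 _; exact: rc_opp.
- by move=> k0 f0 _; exact: rc_wt.
- move=> d a K F ha hF IH hK; exact: (@rc_comb d a K F).
- move=> j0 d0 F0 hj hd hF IH hb; exact: (@rc_avg j0 d0 F0).
Qed.
Lemma sub_sum (s t : seq nat) (g : nat -> R) :
  uniq s -> uniq t -> {subset s <= t} -> (forall v, 0 <= g v) ->
  \sum_(v <- s) g v <= \sum_(v <- t) g v.
Proof.
move=> us ut sst g0.
have E : perm_eq [seq i <- t | i \in s] s.
  apply: uniq_perm.
  - exact: filter_uniq.
  - exact: us.
  move=> v; rewrite mem_filter; case hv: (v \in s) => //=; exact: sst.
rewrite [X in _ <= X](bigID (fun v => v \in s)) /= -[\sum_(i <- t | i \in s) g i]big_filter (perm_big _ E).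
by rewrite lerDl sumr_ge0.
Qed.

Lemma geo_sum B : \sum_(1 <= v < B.+1) (2^-1 : R) ^+ v = 1 - (2^-1) ^+ B.
Proof.
elim: B => [|B IH]; first by rewrite big_geq // expr0 subrr.
rewrite big_nat_recr //= IH exprS.
set y := (2^-1 : R) ^+ B.
have -> : (2^-1 : R) = 1 / 2 by rewrite div1r.
lra.
Qed.

Lemma geo_distinct (s : seq nat) :
  uniq s -> (forall v, v \in s -> (0 < v)%N) ->
  \sum_(v <- s) (2^-1 : R) ^+ v <= 1.
Proof.
move=> us hpos.
pose B := (\max_(v <- s) v)%N.
apply: (@le_trans _ _ (\sum_(v <- iota 1 B) (2^-1 : R) ^+ v)).
  apply: (sub_sum s (iota 1 B) (fun v => (2^-1 : R) ^+ v) us (iota_uniq 1 B)).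
    move=> v hv; rewrite mem_iota hpos //= add1n ltnS.
    exact: leq_bigmax_seq.
  by move=> v; rewrite exprn_ge0 // invr_ge0.
have -> : iota 1 B = index_iota 1 B.+1 by rewrite /index_iota subSS subn0.
rewrite geo_sum lerBlDr lerDl exprn_ge0 // invr_ge0 //.
Qed.
Lemma one_nz d (F : nat -> vec R) l (c : R) :
  (forall i, (i < d)%N -> `|F i l| <= c) -> 0 <= c ->
  (forall i1 i2, (i1 < i2 < d)%N -> blk (F i1) (F i2)) ->
  `|\sum_(i < d) F i l| <= c.
Proof.
move=> hF hc hb.
case: (boolP [exists i : 'I_d, F i l != 0]) => [/existsP [i0 hi0]|hn].
  rewrite (bigD1 i0) //= big1 ?addr0; first exact: hF.
  move=> i hi; apply/eqP; apply/negPn/negP => hil.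
  case: (ltngtP i i0) => h.
  - have [_ [_ hB]] := hb i i0 (introT andP (conj h (ltn_ord i0))).
    by have := hB _ _ hil hi0; rewrite ltnn.
  - have [_ [_ hB]] := hb i0 i (introT andP (conj h (ltn_ord i))).
    by have := hB _ _ hi0 hil; rewrite ltnn.
  - by move: hi; rewrite (_ : i = i0) ?eqxx //; apply: val_inj.
rewrite big1 ?normr0 // => i _.
by apply/eqP; move: hn; rewrite negb_exists => /forallP /(_ i); rewrite negbK.
Qed.

Lemma m_pos k : 0 < ((m_seq k)%:R : R).
Proof. by rewrite ltr0n m_seq_pos. Qed.

Lemma minv_le1 k : ((m_seq k)%:R : R)^-1 <= 1.
Proof. by rewrite invf_le1 ?m_pos // ler1n m_seq_pos. Qed.

Lemma minv_pow k : (0 < k)%N -> ((m_seq k)%:R : R)^-1 <= (2^-1) ^+ k.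
Proof.
move=> hk; rewrite exprVn lef_pV2 ?posrE ?m_pos ?exprn_gt0 //.
by rewrite -natrX ler_nat m_seq_pow.
Qed.

Lemma rat_le1 (q : rat) : q ^+ 2 <= 1 -> `|(ratr q : R)| <= 1.
Proof.
move=> h; rewrite -ratr_norm -(rmorph1 (ratr : rat -> R)) ler_rat.
case: (ler0P q) => hq; nra.
Qed.

Definition PB (f : vec R) := forall l, `|f l| <= 1.
Definition PBw k (f : vec R) := (0 < k)%N /\ forall l, `|f l| <= ((m_seq k)%:R)^-1.

Lemma bd_unit n : PB (unitv R n).
Proof. by move=> l; rewrite /unitv; case: eqP; rewrite ?normr1 ?normr0. Qed.

Lemma bd_opp f : PB f -> PB (fun i => - f i).
Proof. by move=> h l; rewrite normrN. Qed.

Lemma bd_wt k f : PBw k f -> PB f.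
Proof. by move=> [_ h] l; apply: le_trans (h l) (minv_le1 k). Qed.

Lemma bd_comb d (a : nat -> rat) K (F : nat -> vec R) :
  \sum_(i < d) a i ^+ 2 <= 1 ->
  (forall i, (i < d)%N -> PBw (K i) (F i)) ->
  (forall i1 i2, (i1 < d)%N -> (i2 < d)%N -> K i1 = K i2 -> i1 = i2) ->
  PB (fun l => \sum_(i < d) ratr (a i) * F i l).
Proof.
move=> ha hF hK l.
apply: le_trans (ler_norm_sum _ _ _) _.
apply: (@le_trans _ _ (\sum_(i < d) (2^-1 : R) ^+ K i)).
  apply: ler_sum => i _; rewrite normrM.
  have [hk hb] := hF i (ltn_ord i).
  have hai : `|(ratr (a i) : R)| <= 1.
    apply: rat_le1; apply: le_trans ha.
    rewrite (bigD1 i) //= lerDl sumr_ge0 // => j _; exact: sqr_ge0.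
  apply: (@le_trans _ _ (1 * ((m_seq (K i))%:R)^-1)).
    by apply: ler_pM => //; exact: hb.
  by rewrite mul1r minv_pow.
rewrite -(big_mkord xpredT (fun i => (2^-1 : R) ^+ K i)).
rewrite /index_iota subn0 -(big_map K xpredT (fun v => (2^-1 : R) ^+ v)).
apply: geo_distinct.
  rewrite map_inj_in_uniq ?iota_uniq // => i1 i2.
  rewrite !mem_iota !add0n /= => h1 h2; exact: hK.
move=> v /mapP [i]; rewrite mem_iota add0n /= => hi ->.
by case: (hF i hi).
Qed.

Lemma bd_avg j d (F : nat -> vec R) :
  (0 < j)%N ->
  (forall i, (i < d)%N -> PB (F i)) ->
  (forall i1 i2, (i1 < i2 < d)%N -> blk (F i1) (F i2)) ->
  PBw (2 * j) (fun l => ((m_seq (2 * j))%:R)^-1 * \sum_(i < d) F i l).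
Proof.
move=> hj hF hb; split; first by rewrite muln_gt0.
move=> l; rewrite normrM ger0_norm ?invr_ge0 ?ler0n //.
rewrite -[X in _ <= X]mulr1 ler_pM2l ?invr_gt0 ?m_pos //.
apply: one_nz => // i hi; exact: hF.
Qed.

Lemma bound_G0 f : G0 f -> PB f.
Proof.
move=> h.
apply: (@G0_mut R (fun f _ => PB f) (fun k f _ => PBw k f)) h.
- exact: bd_unit.
- by move=> f0 _; exact: bd_opp.
- by move=> k f0 _; exact: bd_wt.
- move=> d a K F ha hF IH hK; exact: (@bd_comb d a K F).
- move=> j0 d0 F0 hj hd hF IH hb; exact: (@bd_avg j0 d0 F0).
Qed.

Lemma bound_G0w k f : G0w k f -> PBw k f.
Proof.
move=> h.
apply: (@G0w_mut R (fun f _ => PB f) (fun k f _ => PBw k f)) h.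
- exact: bd_unit.
- by move=> f0 _; exact: bd_opp.
- by move=> k0 f0 _; exact: bd_wt.
- move=> d a K F ha hF IH hK; exact: (@bd_comb d a K F).
- move=> j0 d0 F0 hj hd hF IH hb; exact: (@bd_avg j0 d0 F0).
Qed.
Lemma sum_ext0 (h : nat -> R) N1 N2 : (N1 <= N2)%N ->
  (forall i, (N1 <= i)%N -> h i = 0) ->
  \sum_(i < N2) h i = \sum_(i < N1) h i.
Proof.
move=> h12 hz.
rewrite -(big_mkord xpredT h) -(big_mkord xpredT h) (big_cat_nat (leq0n N1) h12) /=.
rewrite [X in _ + X]big1_seq ?addr0 // => i /andP [_]; rewrite mem_index_iota => /andP [hi _].
exact: hz.
Qed.

Lemma sum_supp (h : nat -> R) N1 N2 :
  (forall i, (N1 <= i)%N -> h i = 0) -> (forall i, (N2 <= i)%N -> h i = 0) ->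
  \sum_(i < N1) h i = \sum_(i < N2) h i.
Proof.
move=> h1 h2; case: (leqP N1 N2) => h12.
  by rewrite (sum_ext0 h N1 N2 h12 h1).
by rewrite (sum_ext0 h N2 N1 (ltnW h12) h2).
Qed.

Definition nset (P : vec R -> Prop) (x : vec R) :=
  [set r : R | exists f N, P f /\ (forall i, (N <= i)%N -> x i = 0) /\
                              r = `|\sum_(i < N) f i * x i| ]%classic.

Lemma normOver_nset P x : normOver P x = sup (nset P x).
Proof. by []. Qed.

Section Norms.
Variable P : vec R -> Prop.
Hypothesis HB : forall f, P f -> forall l, `|f l| <= 1.
Hypothesis HR : forall f a b, P f -> P (restr a b f).
Hypothesis H0 : P (unitv R 0).

Lemma nset_ub x : c00 x -> has_ubound (nset P x).
Proof.
case=> N0 hN0; exists (\sum_(i < N0) `|x i| : R); move=> r [f [N [hf [hN ->]]]].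
apply: le_trans (ler_norm_sum _ _ _) _.
have -> : \sum_(i < N0) `|x i| = \sum_(i < N) `|x i|.
  apply: (sum_supp (fun i => `|x i|)) => i hi /=.
  - by rewrite hN0 // normr0.
  - by rewrite hN // normr0.
apply: ler_sum => i _; rewrite normrM.
by rewrite -[X in _ <= X]mul1r ler_wpM2r //; exact: HB.
Qed.

Lemma nset_nonempty x : c00 x -> (nset P x !=set0)%classic.
Proof.
case=> N0 hN0; exists `|\sum_(i < N0) unitv R 0 i * x i|.
by exists (unitv R 0), N0.
Qed.

Lemma normOver_ge x f N : c00 x -> P f -> (forall i, (N <= i)%N -> x i = 0) ->
  `|\sum_(i < N) f i * x i| <= normOver P x.
Proof.
move=> hx hf hN; rewrite normOver_nset; apply: ub_le_sup; first exact: nset_ub.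
by exists f, N.
Qed.

Lemma normOver_ge0 x : c00 x -> 0 <= normOver P x.
Proof.
move=> hx; have [r hr] := nset_nonempty x hx.
rewrite normOver_nset; apply: le_trans (ub_le_sup (nset_ub x hx) hr).
by case: hr => f [N [_ [_ ->]]].
Qed.

Lemma normOver_le x (B : R) : c00 x ->
  (forall f N, P f -> (forall i, (N <= i)%N -> x i = 0) ->
     `|\sum_(i < N) f i * x i| <= B) -> normOver P x <= B.
Proof.
move=> hx hB; rewrite normOver_nset; apply: ge_sup; first exact: nset_nonempty.
by move=> r [f [N [hf [hN ->]]]]; exact: hB.
Qed.

Lemma act_le x f N : c00 x -> P f -> `|\sum_(i < N) f i * x i| <= normOver P x.
Proof.
move=> hx hf; case: (posnP N) => hN.
  by rewrite hN big_ord0 normr0 normOver_ge0.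
case: (hx) => N0 hN0.
have -> : \sum_(i < N) f i * x i = \sum_(i < N + N0) restr 0 N.-1 f i * x i.
  rewrite (sum_ext0 (fun i => restr 0 N.-1 f i * x i) N); first last.
  - move=> i hi; rewrite /restr /=; case: ifP => h; last by rewrite mul0r.
    exfalso; move: h hi hN; rewrite /=; lia.
  - exact: leq_addr.
  apply: eq_bigr => i _; rewrite /restr /=.
  have hi := ltn_ord i; case: ifP => // h; exfalso; move: h hi hN; lia.
apply: normOver_ge => //; first exact: HR.
move=> i hi; apply: hN0; exact: leq_trans (leq_addl _ _) hi.
Qed.
End Norms.
Section W0facts.
Variables (Om1 : nat -> Prop) (sigma : seq (vec R) -> nat).

Definition spf (e : R) (a b j : nat) (s : seq (vec R)) : vec R :=
  fun l => if (a <= l <= b)%N then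
             e * (((m_seq (2 * j + 1))%:R)^-1 * \sum_(i < size s) nthv s i l)
           else 0.

Lemma special_bd e a b j s l : `|e| = 1 -> special Om1 sigma j s ->
  `|spf e a b j s l| <= ((m_seq (2 * j + 1))%:R)^-1.
Proof.
move=> he [_ [[_ [hG hb]] _]].
rewrite /spf; case: ifP => _; last by rewrite normr0 invr_ge0 ler0n.
rewrite normrM he mul1r normrM ger0_norm ?invr_ge0 ?ler0n //.
rewrite -[X in _ <= X]mulr1 ler_pM2l ?invr_gt0 ?m_pos //.
apply: one_nz => //.
  by move=> i hi; case: (hG i hi) => hg _; exact: bound_G0.
Qed.

Lemma W0_spf f : W0 Om1 sigma f -> G0 f \/
  exists e a b j s, `|e| = 1 /\ (0 < j)%N /\ special Om1 sigma j s /\ f = spf e a b j s.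
Proof.
case=> [h|[e [a [b [j [s [he [hj [hs ->]]]]]]]]]; first by left.
by right; exists e, a, b, j, s.
Qed.

Lemma W0_bound f : W0 Om1 sigma f -> forall l, `|f l| <= 1.
Proof.
case/W0_spf => [h|[e [a [b [j [s [he [hj [hs ->]]]]]]]]]; first exact: bound_G0.
move=> l; apply: le_trans (special_bd _ _ _ _ _ l he hs) (minv_le1 _).
Qed.

Lemma W0_restr f a b : W0 Om1 sigma f -> W0 Om1 sigma (restr a b f).
Proof.
case/W0_spf => [h|[e [a' [b' [j [s [he [hj [hs ->]]]]]]]]].
  by left; exact: restr_G0.
right; exists e, (maxn a a'), (minn b b'), j, s; split => //; split => //; split => //.
apply: funext => l; rewrite /restr /spf.
have -> : (maxn a a' <= l <= minn b b')%N = (a <= l <= b)%N && (a' <= l <= b')%N.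
  by rewrite geq_max leq_min; case: (a <= l)%N; case: (a' <= l)%N; case: (l <= b)%N; case: (l <= b')%N.
by case: (a <= l <= b)%N; case: (a' <= l <= b')%N.
Qed.

Lemma W0_G0 f : G0 f -> W0 Om1 sigma f.
Proof. by left. Qed.

Lemma W0_unit : W0 Om1 sigma (unitv R 0).
Proof. left; exact: G0_unit. Qed.
End W0facts.
Lemma partial_lt (eps : R) (epsk : nat -> R) :
  (forall k, 0 < epsk k) ->
  (\sum_(0 <= k <oo) (epsk k)%:E < eps%:E)%E ->
  forall K, \sum_(k < K) epsk k < eps.
Proof.
move=> hpos hs K.
have h := @nneseries_lim_ge R (fun k => (epsk k)%:E) xpredT 0 K.
have h' : ((\sum_(0 <= i < K) (epsk i)%:E)%R <= \sum_(0 <= k <oo) (epsk k)%:E)%E.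
  apply: h => n _ _; rewrite lee_fin; exact: ltW.
have := lt_le_trans (y := (\sum_(0 <= i < K) (epsk i)%:E)%R) (x := (\sum_(0 <= i < K) (epsk i)%:E)%R).
move: (le_lt_trans h' hs); rewrite sumEFin lte_fin big_mkord => H _; exact: H.
Qed.

Definition bseq (p : nat -> bool) (epsk : nat -> R) k : R :=
  if ~~ p k then epsk k else if (0 < k)%N && p k.-1 then epsk k.-1 else 1.

Lemma comb_sum (p : nat -> bool) (epsk : nat -> R) n :
  (forall k, p k -> p k.+1) -> (forall k, 0 <= epsk k) ->
  \sum_(k < n) bseq p epsk k <= 1 + \sum_(k < n) epsk k.
Proof.
move=> hp he.
pose b := bseq p epsk.
suff H : \sum_(k < n) b k <=
   (if (0 < n)%N && p n.-1 then 1 + \sum_(k < n.-1) epsk k else \sum_(k < n) epsk k).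
  apply: le_trans H _; case: n => [|n] /=; first by rewrite big_ord0 lerDr.
  case: (p n) => /=; last by rewrite lerDr.
  by rewrite [X in _ <= _ + X]big_ord_recr /= lerD2l lerDl.
elim: n => [|n IH]; first by rewrite !big_ord0.
rewrite big_ord_recr /= [X in _ <= (if _ then _ else X)]big_ord_recr /=.
rewrite /b /bseq; case hpn: (p n) => /=.
  case hq: ((0 < n)%N && p n.-1); rewrite hq in IH.
    case: n {hpn IH} hq (IH) => [//|n] /= _ IH'.
    by rewrite [X in _ <= 1 + X]big_ord_recr /= addrA lerD2r.
  by rewrite addrC lerD2l.
have hq : ((0 < n)%N && p n.-1) = false.
  case: n {IH} hpn => [//|n] /= hpn; apply/negbTE/negP => hpn'; by rewrite hp in hpn.
rewrite hq in IH; by rewrite lerD2r.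
Qed.
Lemma sum1_seq (T : Type) (s : seq T) : \sum_(i <- s) (1 : R) = (size s)%:R.
Proof.
elim: s => [|a s IH]; first by rewrite big_nil.
by rewrite big_cons IH /= -add1n natrD.
Qed.

Section Seq.
Variables (Om1 Om2 : nat -> Prop) (sigma : seq (vec R) -> nat).
Variables (eps : R) (epsk : nat -> R) (j : nat -> nat) (x : nat -> vec R).
Hypothesis hek : forall k, 0 < epsk k.
Hypothesis hj : forall k, (j k < j k.+1)%N.
Hypothesis hjev : forall k, ~~ odd (j k) /\ (0 < j k)%N.
Hypothesis hc00 : forall k, c00 (x k).
Hypothesis hblk : forall k, blk (x k) (x k.+1).
Hypothesis hnW : forall k, normW Om1 sigma (x k) = 1.
Hypothesis hsupp : forall k, exists c, supp_size (x k) c /\ c%:R / (m_seq (j k))%:R < epsk k.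
Hypothesis hG : forall k, normG (x k.+1) <= epsk k / (n_seq (j k))%:R.

Let WB := W0_bound Om1 sigma.
Let WR f a b := W0_restr Om1 sigma f a b.
Let WU := W0_unit Om1 sigma.
Let GR f a b (h : G0 f) := restr_G0 f h a b.
Let GU := G0_unit R 0.

Lemma actW_le (f : vec R) (N : nat) (y : vec R) : c00 y -> W0 Om1 sigma f ->
  `|\sum_(i < N) f i * y i| <= normW Om1 sigma y.
Proof. move=> hy hf; exact: (act_le (W0 Om1 sigma) WB WR WU y f N hy hf). Qed.

Lemma actG_le (f : vec R) (N : nat) (y : vec R) : c00 y -> G0 f ->
  `|\sum_(i < N) f i * y i| <= normG y.
Proof. move=> hy hf; exact: (act_le (@G0 R) bound_G0 GR GU y f N hy hf). Qed.

Lemma x_le1 k i : `|x k i| <= 1.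
Proof.
have := actW_le (unitv R i) i.+1 (x k) (hc00 k) (W0_G0 Om1 sigma _ (G0_unit R i)).
rewrite hnW big_ord_recr /= big1 ?add0r; first by rewrite /unitv eqxx mul1r.
by move=> l _; rewrite /unitv; case: eqP => [h|_]; [move: (ltn_ord l); rewrite h ltnn | rewrite mul0r].
Qed.

Lemma sum_abs_x k N c : supp_size (x k) c -> \sum_(i < N) `|x k i| <= c%:R.
Proof.
case=> S [uS [hS <-]].
rewrite -(big_mkord xpredT (fun i => `|x k i|)) (bigID (fun i => x k i != 0)) /=.
rewrite [X in _ + X]big1 ?addr0; last by move=> i /negPn/eqP ->; rewrite normr0.
rewrite -big_filter.
apply: (@le_trans _ _ (\sum_(i <- [seq i <- index_iota 0 N | x k i != 0]) 1)).
  by apply: ler_sum => i _; exact: x_le1.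
rewrite sum1_seq ler_nat; apply: uniq_leq_size.
  by apply: filter_uniq; exact: iota_uniq.
by move=> i; rewrite mem_filter hS => /andP [].
Qed.
Lemma spf_act e a b j0 s N (y : vec R) :
  \sum_(i < N) spf e a b j0 s i * y i =
  e * (((m_seq (2 * j0 + 1))%:R)^-1 *
       \sum_(t < size s) \sum_(i < N) restr a b (nthv s t) i * y i).
Proof.
transitivity (\sum_(i < N) e * (((m_seq (2 * j0 + 1))%:R)^-1 *
     \sum_(t < size s) restr a b (nthv s t) i * y i)).
  apply: eq_bigr => i _; rewrite /spf /restr; case: ifP => h.
    by rewrite -!mulrA mulr_suml.
  by rewrite mul0r big1 ?mulr0 // => t _; rewrite mul0r.
by rewrite -mulr_sumr -mulr_sumr exchange_big.
Qed.

Lemma eps_div k : epsk k / (n_seq (j k))%:R <= epsk k.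
Proof.
rewrite ler_pdivrMr ?ltr0n ?n_seq_pos //; apply: ler_peMr.
  exact: ltW.
by rewrite ler1n n_seq_pos.
Qed.

Lemma normG_ge0 (y : vec R) : c00 y -> 0 <= normG y.
Proof. move=> hy; exact: (normOver_ge0 (@G0 R) bound_G0 GU y hy). Qed.

Lemma term_bd f N : W0 Om1 sigma f -> exists p : nat -> bool,
  (forall k, p k -> p k.+1) /\
  forall k, `|\sum_(i < N) f i * x k i| <= bseq p epsk k.
Proof.
move=> hW; case/W0_spf: (hW) => [hf | [e [a [b [j0 [s [he [hj0 [hs hfe]]]]]]]]].
  exists (fun _ => true); split => // k; rewrite /bseq /=; case: k => [|k] /=.
    by rewrite -(hnW 0); apply: actW_le.
  apply: le_trans (actG_le f N (x k.+1) (hc00 _) hf) _.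
  exact: le_trans (hG k) (eps_div k).
pose J := (2 * j0 + 1)%N.
exists (fun k => J < j k)%N; split; first by move=> k h; exact: ltn_trans h (hj k).
move=> k; rewrite /bseq; case hpk: (J < j k)%N => /=.
  case hq: ((0 < k)%N && (J < j k.-1)%N) => /=; last by rewrite -(hnW k); apply: actW_le.
  case: k hq hpk => [//|k] /= hJk _.
  rewrite hfe spf_act normrM he mul1r normrM ger0_norm ?invr_ge0 ?ler0n //.
  apply: (@le_trans _ _ (1 * \sum_(t < size s) normG (x k.+1))).
    apply: ler_pM; rewrite ?invr_ge0 ?ler0n ?minv_le1 //.
    apply: le_trans (ler_norm_sum _ _ _) _; apply: ler_sum => t _.
    apply: actG_le => //; apply: GR.
    by case: hs => [_ [[_ [hG0 _]] _]]; case: (hG0 t (ltn_ord t)).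
  rewrite mul1r sumr_const card_ord.
  case: hs => [hsz _]; rewrite hsz.
  rewrite -mulr_natr.
  apply: (@le_trans _ _ (epsk k / (n_seq (j k))%:R * (n_seq (2 * j0 + 1))%:R)).
    by rewrite ler_wpM2r ?ler0n.
  rewrite mulrAC ler_pdivrMr ?ltr0n ?n_seq_pos // ler_pM2l // ler_nat.
  by apply: n_seq_mono; exact: ltnW.
have hjk : (j k < J)%N.
  rewrite ltn_neqAle leqNgt hpk andbT; apply/eqP => hE.
  by case: (hjev k) => hodd _; move: hodd; rewrite hE /J addn1 /= oddM.
case: (hsupp k) => c [hc hlt].
apply: le_trans (ler_norm_sum _ _ _) _.
apply: (@le_trans _ _ (((m_seq J)%:R)^-1 * \sum_(i < N) `|x k i|)).
  rewrite mulr_sumr; apply: ler_sum => i _; rewrite normrM.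
  apply: ler_wpM2r; first exact: normr_ge0.
  by rewrite hfe; exact: (special_bd Om1 sigma e a b j0 s i he hs).
apply: ltW; apply: le_lt_trans hlt.
rewrite mulrC ler_pM ?sumr_ge0 ?invr_ge0 ?ler0n //.
  exact: sum_abs_x.
by rewrite lef_pV2 ?posrE ?m_pos // ler_nat; apply: m_seq_mono; exact: ltnW.
Qed.
Lemma blk_trans k i l l' : (k < i)%N -> x k l != 0 -> x i l' != 0 -> (l < l')%N.
Proof.
move=> hki; rewrite -(subnKC hki).
elim: (i - k.+1)%N l' => [|d IH] l' hl hl'.
  by case: (hblk k) => [_ [_ hB]]; rewrite addn0 in hl'; exact: hB.
rewrite addnS in hl'.
case: (hblk (k.+1 + d)) => [[w hw] [_ hB]].
exact: ltn_trans (IH w hl hw) (hB _ _ hw hl').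
Qed.

Lemma c00_sum n (a : nat -> R) : c00 (fun l => \sum_(i < n) a i * x i l).
Proof.
elim: n => [|n [N hN]]; first by exists 0%N => i _; rewrite big_ord0.
case: (hc00 n) => N' hN'; exists (maxn N N') => i hi.
rewrite big_ord_recr /= hN ?hN' ?mulr0 ?addr0 //.
  exact: leq_trans (leq_maxr _ _) hi.
exact: leq_trans (leq_maxl _ _) hi.
Qed.
Lemma lower_i n (a : nat -> R) i : (i < n)%N ->
  `|a i| <= normW Om1 sigma (fun l => \sum_(k < n) a k * x k l).
Proof.
move=> hin.
set y := fun l => _.
have hy : c00 y := c00_sum n a.
have hy0 : 0 <= normW Om1 sigma y := normOver_ge0 _ WB WU y hy.
case: (eqVneq (a i) 0) => [->|hai]; first by rewrite normr0.
case: (hblk i) => [ex1 [ex2 _]].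
case: (ex_minnP ex1) => lo hlo lomin.
case: (ex_minnP ex2) => mm hmm mmmin.
have hlomm : (lo < mm)%N := blk_trans i i.+1 lo mm (ltnSn i) hlo hmm.
have pw : forall f l, restr lo mm.-1 f l * y l = a i * (f l * x i l).
  move=> f l; rewrite /restr /y; case: ifP => hl.
    rewrite (bigD1 (Ordinal hin)) //= big1 ?addr0; first by rewrite mulrCA.
    move=> k hk; apply/eqP; rewrite mulf_eq0; apply/orP; right; apply/negPn/negP => hkl.
    have hk' : (k : nat) != i by move: hk; apply: contra => /eqP h; apply/eqP; apply: val_inj.
    case: (ltngtP k i) => hki.
    - have := blk_trans k i l lo hki hkl hlo; move: hl; lia.
    - have : (mm <= l)%N.
        case: (ltngtP k i.+1) => hk1.
        + by move: hki hk1; lia.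
        + exact: ltnW (blk_trans i.+1 k mm l hk1 hmm hkl).
        + by apply: mmmin; rewrite -hk1.
      move: hl hlomm; lia.
    - by move: hk'; rewrite hki eqxx.
  rewrite mul0r; apply/esym/eqP; rewrite !mulf_eq0; apply/orP; right; apply/orP; right.
  apply/negPn/negP => hxl.
  have h1 := lomin l hxl.
  have h2 := blk_trans i i.+1 l mm (ltnSn i) hxl hmm.
  by move: hl h1 h2; lia.
have hpos : 0 < `|a i| by rewrite normr_gt0.
rewrite -[X in X <= _]mulr1 -(hnW i) mulrC -ler_pdivlMr //.
apply: (normOver_le _ WU (x i) _ (hc00 i)) => f N hf _.
rewrite ler_pdivlMr // mulrC -normrM mulr_sumr.
have -> : \sum_(k < N) a i * (f k * x i k) = \sum_(k < N) restr lo mm.-1 f k * y k.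
  by apply: eq_bigr => k _; rewrite pw.
exact: actW_le _ _ _ hy (WR f lo mm.-1 hf).
Qed.
Lemma main_aux :
  (\sum_(0 <= k <oo) (epsk k)%:E < eps%:E)%E ->
  forall (n : nat) (a : nat -> R),
    let M := \big[Num.max/0]_(i < n) `|a i| in
    M <= normW Om1 sigma (fun l => \sum_(i < n) a i * x i l) /\
    normW Om1 sigma (fun l => \sum_(i < n) a i * x i l) <= (1 + eps) * M.
Proof.
move=> hser n a M.
set y := fun l => _.
have hy : c00 y := c00_sum n a.
have hy0 : 0 <= normW Om1 sigma y := normOver_ge0 _ WB WU y hy.
have hM0 : 0 <= M by apply: bigmax_ge_id.
have haM : forall k : 'I_n, `|a k| <= M by move=> k; exact: le_bigmax.
split.
  apply: bigmax_le => // k _; exact: lower_i.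
apply: (normOver_le _ WU y _ hy) => f N hf _.
have [p [hp hb]] := term_bd f N hf.
have -> : \sum_(l < N) f l * y l = \sum_(k < n) a k * \sum_(l < N) f l * x k l.
  rewrite /y; under eq_bigr do rewrite mulr_sumr.
  rewrite exchange_big /=; apply: eq_bigr => k _; rewrite mulr_sumr.
  by apply: eq_bigr => l _; rewrite mulrCA.
apply: le_trans (ler_norm_sum _ _ _) _.
apply: (@le_trans _ _ (\sum_(k < n) M * bseq p epsk k)).
  apply: ler_sum => k _; rewrite normrM; apply: ler_pM => //; exact: normr_ge0.
rewrite -mulr_sumr mulrC ler_wpM2r //.
apply: le_trans (comb_sum p epsk n hp (fun k => ltW (hek k))) _.
by rewrite lerD2l ltW // (partial_lt eps epsk hek hser n).
Qed.
End Seq.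
End Main.

Theorem mainTheorem10 (R : realType) (Om1 Om2 : nat -> Prop)
  (sigma : seq (vec R) -> nat)
  (Hadm : admissible Om1 Om2 sigma)
  (eps : R) (epsk : nat -> R) (j : nat -> nat) (x : nat -> vec R) :
  0 < eps ->
  (forall k, 0 < epsk k) ->
  (\sum_(0 <= k <oo) (epsk k)%:E < eps%:E)%E ->
  (forall k, (j k < j k.+1)%N) ->
  (forall k, ~~ odd (j k) /\ (0 < j k)%N) ->
  (forall k, c00 (x k)) ->
  (forall k, blk (x k) (x k.+1)) ->
  (forall k, normW Om1 sigma (x k) = 1) ->
  (forall k, exists c, supp_size (x k) c /\ c%:R / (m_seq (j k))%:R < epsk k) ->
  (forall k, normG (x k.+1) <= epsk k / (n_seq (j k))%:R) ->
  forall (n : nat) (a : nat -> R),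
    let M := \big[Num.max/0]_(i < n) `|a i| in
    M <= normW Om1 sigma (fun l => \sum_(i < n) a i * x i l) /\
    normW Om1 sigma (fun l => \sum_(i < n) a i * x i l) <= (1 + eps) * M.
Proof.
move=> heps hek hser hj hjev hc00 hblk hnW hsupp hG.
exact: (main_aux R Om1 sigma eps epsk j x hek hj hjev hc00 hblk hnW hsupp hG hser).
Qed.
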